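(* Let $k$ be a field, $R=k[x_1,\ldots,x_n]$, $n\ge2$, and let $I$ be an almost reverse lexicographic ideal whose last generator $M_\omega$ satisfies $\max M_\omega=n$. Let $0\in\mathbb{Z}^{n-2}$ be the zero tuple (so $f_{n-1}(0)=\min\{t: x_{n-1}^t\in I\}$). Then: (1) for every $d\ge f_{n-1}(0)$, $H(R/I,d-1)-H(R/I,d)=|\{M\in\mathcal{G}(I):\max M=n,\ \deg M=d\}|$; in particular $H(R/I,d)\le H(R/I,d-1)$ for $d\ge f_{n-1}(0)$; (2) $H(R/I,d)>H(R/I,d-1)$ for every $d<f_{n-1}(0)$; (3) $f_{n-1}(0)=\min\{d: H(R/I,d)\le H(R/I,d-1)\}$; (4) $H(R/I+(x_n),d)=\max\{0,H(R/I,d)-H(R/I,d-1)\}$ for every $d$.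
   Context: $H(A,d)=\dim_k A_d$ is the Hilbert function of a graded quotient $A$ of $R$ (with $H(A,d)=0$ for $d<0$). Monomial order: degree reverse lexicographic: for $M=x^\alpha,N=x^\beta$, $M>N$ iff $\deg M>\deg N$, or degrees are equal and for the largest $s$ with $\alpha_s\neq\beta_s$ one has $\alpha_s<\beta_s$. A monomial ideal $I$ is almost reverse lexicographic if for every monomial $M$ and every minimal monomial generator $N$ of $I$ with $\deg M=\deg N$ and $M>N$, $M\in I$. $\mathcal{G}(I)$ is the minimal monomial generating set; $\max M$ is the largest $i$ with $x_i\mid M$. The last generator $M_\omega$ is the element of $\mathcal{G}(I)$ of maximal degree that is smallest in the order among elements of $\mathcal{G}(I)$ of that degree. *)

(* Defs.v *)
(* Monomial ideals of k[x_1..x_n] are represented by their sets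
   of monomials (exponent vectors). *)
From HB Require Import structures.
From mathcomp Require Import all_boot all_order all_algebra.
From mathcomp Require Import boolp.
Set Implicit Arguments. Unset Strict Implicit. Unset Printing Implicit Defensive.

(* monomial x^alpha of k[x_1,...,x_n]; variable x_{i+1} has index i : 'I_n *)
Definition mon (n : nat) := {ffun 'I_n -> nat}.

Definition mdeg n (m : mon n) : nat := \sum_(i < n) m i.

Definition mdvd n (a b : mon n) : Prop := forall i, a i <= b i.

Definition is_monomial_ideal n (I : mon n -> Prop) : Prop :=
  forall a b, I a -> mdvd a b -> I b.

Definition mingen n (I : mon n -> Prop) (M : mon n) : Prop :=
  I M /\ forall N, I N -> mdvd N M -> N = M.

Definition revlex_gt n (M N : mon n) : Prop :=
  mdeg N < mdeg M \/
  (mdeg M = mdeg N /\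
   exists s : 'I_n, M s < N s /\ forall t : 'I_n, s < t -> M t = N t).

Definition almost_revlex n (I : mon n -> Prop) : Prop :=
  is_monomial_ideal I /\
  forall M N, mingen I N -> mdeg M = mdeg N -> revlex_gt M N -> I M.

(* max M = largest (1-based) i with x_i | M *)
Definition maxvar n (M : mon n) : nat := \max_(i < n | 0 < M i) i.+1.

Definition last_gen n (I : mon n -> Prop) (Mw : mon n) : Prop :=
  mingen I Mw /\
  (forall N, mingen I N -> mdeg N <= mdeg Mw) /\
  (forall N, mingen I N -> mdeg N = mdeg Mw -> N = Mw \/ revlex_gt N Mw).

Definition of_bounded n d (m : {ffun 'I_n -> 'I_d.+1}) : mon n :=
  [ffun i => val (m i)].

(* number of monomials of degree d satisfying P (all have exponents <= d) *)
Definition count_deg n (P : mon n -> Prop) (d : nat) : nat :=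
  #|[set m : {ffun 'I_n -> 'I_d.+1} |
      (mdeg (of_bounded m) == d) && `[< P (of_bounded m) >]]|.

Definition hilb n (I : mon n -> Prop) (d : int) : int :=
  match d with
  | Posz k => (count_deg (fun m => ~ I m) k)%:Z
  | Negz _ => 0%R
  end.

(* the monomial ideal I + (x_{j+1}) *)
Definition add_var n (I : mon n -> Prop) (j : nat) : mon n -> Prop :=
  fun m => I m \/ exists i : 'I_n, val i = j /\ 0 < m i.

(* x_{j+1}^t *)
Definition xpow n (j t : nat) : mon n := [ffun i : 'I_n => if val i == j then t else 0].

(* Main.v *)
Require Import Defs.
From HB Require Import structures.
From mathcomp Require Import all_boot all_order all_algebra.
From mathcomp Require Import boolp.
From mathcomp Require Import zify.
From Stdlib Require Import Classical.
Import Order.TTheory GRing.Theory Num.Theory.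
Set Implicit Arguments. Unset Strict Implicit. Unset Printing Implicit Defensive.


Lemma le_mdeg n (m : mon n) i : m i <= mdeg m.
Proof. by rewrite /mdeg (bigD1 i) //= leq_addr. Qed.

Lemma of_bounded_inj n d (a b : {ffun 'I_n -> 'I_d.+1}) :
  of_bounded a = of_bounded b -> a = b.
Proof.
move=> h; apply/ffunP => i; apply: val_inj.
by have := congr1 (fun f : mon n => f i) h; rewrite !ffunE.
Qed.

Definition to_b n d (m : mon n) : {ffun 'I_n -> 'I_d.+1} := [ffun i => inord (m i)].

Lemma to_bK n d (m : mon n) : mdeg m <= d -> of_bounded (to_b d m) = m.
Proof.
move=> h; apply/ffunP => i; rewrite !ffunE /= inordK //.
by apply: leq_trans (le_mdeg m i) h.
Qed.

Lemma count_transfer n (P Q : mon n -> Prop) d e (F : mon n -> mon n) :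
  (forall m, mdeg m = d -> P m -> mdeg (F m) = e /\ Q (F m)) ->
  (forall m1 m2, mdeg m1 = d -> mdeg m2 = d -> P m1 -> P m2 -> F m1 = F m2 -> m1 = m2) ->
  (forall M, mdeg M = e -> Q M -> exists m, [/\ mdeg m = d, P m & F m = M]) ->
  count_deg P d = count_deg Q e.
Proof.
move=> HF Hinj Hsur; rewrite /count_deg.
set A := [set m : {ffun 'I_n -> 'I_d.+1} | _].
set B := [set m : {ffun 'I_n -> 'I_e.+1} | _].
pose f (x : {ffun 'I_n -> 'I_d.+1}) : {ffun 'I_n -> 'I_e.+1} := to_b e (F (of_bounded x)).
have inA x : x \in A -> mdeg (of_bounded x) = d /\ P (of_bounded x).
  by rewrite inE => /andP [/eqP -> /asboolP].
have fE x : x \in A -> of_bounded (f x) = F (of_bounded x).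
  move=> /inA [h1 h2]; rewrite to_bK //; by have [-> _] := HF _ h1 h2.
rewrite -(card_in_imset (f := f)); last first.
  move=> x y xA yA /(congr1 (@of_bounded _ _)); rewrite !fE // => h.
  apply: of_bounded_inj; have [? ?] := inA _ xA; have [? ?] := inA _ yA.
  by apply: Hinj.
apply: eq_card => y; apply/imsetP/idP.
  move=> [x xA ->]; rewrite inE; have [h1 h2] := inA _ xA.
  have [h3 h4] := HF _ h1 h2; rewrite fE // h3 eqxx /=; exact/asboolP.
rewrite inE => /andP [/eqP h1 /asboolP h2].
have [m [m1 m2 m3]] := Hsur _ h1 h2.
exists (to_b d m); first by rewrite inE to_bK ?m1 // eqxx /=; exact/asboolP.
apply: of_bounded_inj; rewrite fE; last by rewrite inE to_bK ?m1 // eqxx /=; exact/asboolP.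
by rewrite to_bK ?m1 // m3.
Qed.

Lemma count_ext n (P Q : mon n -> Prop) d :
  (forall m, mdeg m = d -> (P m <-> Q m)) -> count_deg P d = count_deg Q d.
Proof.
move=> h; apply: (count_transfer (F := id)).
- by move=> m hm /(h _ hm).
- by [].
- by move=> M hM /(h _ hM) hP; exists M.
Qed.

Lemma count_split n (P Q : mon n -> Prop) d :
  count_deg P d = count_deg (fun m => P m /\ Q m) d + count_deg (fun m => P m /\ ~ Q m) d.
Proof.
rewrite /count_deg.
set A := [set m : {ffun 'I_n -> 'I_d.+1} | (mdeg (of_bounded m) == d) && `[< P (of_bounded m) >]].
rewrite -(cardsID [set m : {ffun 'I_n -> 'I_d.+1} | `[< Q (of_bounded m) >]] A).
congr (_ + _); apply: eq_card => x; rewrite !inE.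
- case: (mdeg _ == d) => //=; apply/andP/asboolP.
    by move=> [/asboolP ? /asboolP ?].
  by move=> [? ?]; split; apply/asboolP.
- case: (mdeg _ == d); rewrite ?andbF //=; apply/andP/asboolP.
    by move=> [/asboolP ? /asboolP ?].
  by move=> [? ?]; split; apply/asboolP.
Qed.

Lemma count0 n (P : mon n -> Prop) d :
  (forall m, mdeg m = d -> ~ P m) -> count_deg P d = 0.
Proof.
move=> h; apply/eqP; rewrite cards_eq0; apply/eqP/setP => x; rewrite !inE.
apply/negbTE/negP => /andP [/eqP h1 /asboolP h2]; exact: (h _ h1 h2).
Qed.

Lemma count_gt0 n (P : mon n -> Prop) d m :
  mdeg m = d -> P m -> 0 < count_deg P d.
Proof.
move=> h1 h2; rewrite card_gt0; apply/set0Pn; exists (to_b d m).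
by rewrite inE to_bK ?h1 // eqxx /=; exact/asboolP.
Qed.

Definition upd n (m : mon n) (i : 'I_n) (v : nat) : mon n :=
  [ffun j => if j == i then v else m j].

Lemma mdeg_upd n (m : mon n) i v : mdeg (upd m i v) + m i = mdeg m + v.
Proof.
rewrite /mdeg (bigD1 i) //= [in RHS](bigD1 i) //= ffunE eqxx.
have -> : \sum_(j < n | j != i) upd m i v j = \sum_(j < n | j != i) m j.
  by apply: eq_bigr => j /negbTE hj; rewrite ffunE hj.
rewrite -[RHS]addnA [RHS]addnC; congr (_ + _); by rewrite addnC.
Qed.

Lemma upd_eq n (m : mon n) i v : upd m i v i = v.
Proof. by rewrite ffunE eqxx. Qed.
Lemma upd_neq n (m : mon n) i v j : j != i -> upd m i v j = m j.
Proof. by move=> /negbTE h; rewrite ffunE h. Qed.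

Lemma mdvd_deg n (a b : mon n) : mdvd a b -> mdeg a <= mdeg b.
Proof. by move=> h; apply: leq_sum => i _; apply: h. Qed.

Lemma mdvd_anti n (a b : mon n) : mdvd a b -> mdvd b a -> a = b.
Proof. by move=> h1 h2; apply/ffunP => i; apply/eqP; rewrite eqn_leq h1 h2. Qed.

Lemma mdvd_trans n (a b c : mon n) : mdvd a b -> mdvd b c -> mdvd a c.
Proof. by move=> h1 h2 i; apply: leq_trans (h1 i) (h2 i). Qed.

Lemma neq_ex n (a b : mon n) : a <> b -> exists i, a i <> b i.
Proof.
move=> h; apply: NNPP => hn; apply: h; apply/ffunP => i.
by apply: NNPP => hi; apply: hn; exists i.
Qed.

Lemma mdvd_lt n (a b : mon n) : mdvd a b -> a <> b -> mdeg a < mdeg b.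
Proof.
move=> h hne; have [i hi] := neq_ex hne.
have hlt : a i < b i by have := h i; lia.
have h1 := mdeg_upd a i 0; have h2 := mdeg_upd b i 0.
have : mdeg (upd a i 0) <= mdeg (upd b i 0).
  apply: mdvd_deg => j; case: (eqVneq j i) => [->|hj]; first by rewrite !upd_eq.
  by rewrite !upd_neq //.
lia.
Qed.

Lemma mdeg0 n (m : mon n) i : mdeg m = 0 -> m i = 0.
Proof. by move=> h; have := le_mdeg m i; lia. Qed.

Lemma mdeg_pos n (m : mon n) : 0 < mdeg m -> exists i, 0 < m i.
Proof.
move=> h; apply: NNPP => hn; move: h; rewrite /mdeg big1 // => i _.
by apply/eqP; rewrite -leqn0 leqNgt; apply/negP => hi; apply: hn; exists i.
Qed.

Lemma mingen_ex n (I : mon n -> Prop) N : I N -> exists N', mingen I N' /\ mdvd N' N.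
Proof.
move: {2}(mdeg N) (leqnn (mdeg N)) => k; elim: k N => [|k IH] N hk hN.
  exists N; split; last by [].
  split => // N0 h0 hd; apply: NNPP => hne.
  have hlt := mdvd_lt hd hne; lia.
case: (classic (mingen I N)) => [hm|hm]; first by exists N; split => // i.
have [N0 [h0 [hd hne]]] : exists N0, I N0 /\ mdvd N0 N /\ N0 <> N.
  apply: NNPP => hn; apply: hm; split => // N0 h0 hd; apply: NNPP => hne.
  by apply: hn; exists N0.
have hlt := mdvd_lt hd hne.
have hk0 : mdeg N0 <= k by lia.
have [N' [h1 h2]] := IH N0 hk0 h0.
by exists N'; split => //; apply: mdvd_trans h2 hd.
Qed.

Section Main.
Variable n : nat.
Variable I : mon n.+2 -> Prop.
Hypothesis HI : almost_revlex I.

Definition lst : 'I_n.+2 := ord_max.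
Definition pen : 'I_n.+2 := Ordinal (leqW (ltnSn n) : n < n.+2).
Definition incr (m : mon n.+2) := upd m lst (m lst).+1.
Definition decr (m : mon n.+2) := upd m lst (m lst).-1.

Lemma mclosed (a b : mon n.+2) : I a -> mdvd a b -> I b.
Proof. by case: HI => h _; apply: h. Qed.

Lemma arev (M N : mon n.+2) : mingen I N -> mdeg M = mdeg N -> revlex_gt M N -> I M.
Proof. by case: HI => _ h; apply: h. Qed.

Lemma mdeg_incr (m : mon n.+2) : mdeg (incr m) = (mdeg m).+1.
Proof. by have := mdeg_upd m lst (m lst).+1; rewrite /incr; lia. Qed.

Lemma mdeg_decr (m : mon n.+2) : 0 < m lst -> mdeg (decr m) = (mdeg m).-1.
Proof. by move=> h; have := mdeg_upd m lst (m lst).-1; rewrite /decr; lia. Qed.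

Lemma decr_incr (m : mon n.+2) : decr (incr m) = m.
Proof.
apply/ffunP => i; rewrite /decr /incr; case: (eqVneq i lst) => [->|h].
  by rewrite !upd_eq.
by rewrite !ffunE (negbTE h).
Qed.

Lemma incr_decr (m : mon n.+2) : 0 < m lst -> incr (decr m) = m.
Proof.
move=> h0; apply/ffunP => i; rewrite /decr /incr; case: (eqVneq i lst) => [->|h].
  by rewrite !ffunE !eqxx prednK.
by rewrite !ffunE (negbTE h).
Qed.

Lemma decr_dvd (m : mon n.+2) : mdvd (decr m) m.
Proof.
move=> i; rewrite /decr; case: (eqVneq i lst) => [->|h].
  by rewrite upd_eq leq_pred.
by rewrite upd_neq.
Qed.

Lemma incr_dvd (m : mon n.+2) : mdvd m (incr m).
Proof.
move=> i; rewrite /incr; case: (eqVneq i lst) => [->|h].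
  by rewrite upd_eq.
by rewrite upd_neq.
Qed.

Lemma maxvarE (M : mon n.+2) : maxvar M = n.+2 <-> 0 < M lst.
Proof.
split.
  move=> h; rewrite lt0n; apply/negP => /eqP h0.
  have : maxvar M <= n.+1.
    apply/bigmax_leqP => i hi; have := ltn_ord i; rewrite ltnS leq_eqVlt.
    case/orP => // /eqP hi'; have : i = lst by apply: val_inj.
    by move=> hl; move: hi; rewrite hl h0.
  lia.
move=> h; apply/eqP; rewrite eqn_leq; apply/andP; split.
  by apply/bigmax_leqP => i _; apply: ltn_ord.
by apply: (leq_bigmax_cond (F := fun i : 'I_n.+2 => i.+1) (P := fun i => 0 < M i) lst h).
Qed.

Lemma stab (N : mon n.+2) j : mingen I N -> 0 < N lst -> j != lst -> I (upd (decr N) j (N j).+1).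
Proof.
move=> hN h0 hj.
have hdeg : mdeg (upd (decr N) j (N j).+1) = mdeg N.
  have h1 := mdeg_upd (decr N) j (N j).+1.
  have h2 := mdeg_decr h0.
  have h3 : decr N j = N j by rewrite /decr upd_neq.
  have h4 := le_mdeg N lst.
  rewrite h3 h2 in h1; lia.
apply: (arev hN) => //.
right; split => //.
exists lst; split.
  rewrite upd_neq 1?eq_sym // /decr upd_eq; lia.
by move=> t ht; have := ltn_ord t; rewrite /= in ht; lia.
Qed.

Lemma mingenE (M : mon n.+2) : 0 < M lst -> (mingen I M <-> I M /\ ~ I (decr M)).
Proof.
move=> h0; split.
  move=> [hM hmin]; split => // hd.
  have := hmin _ hd (decr_dvd M) => /(congr1 (fun f : mon n.+2 => f lst)).
  rewrite /decr upd_eq; lia.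
move=> [hM hd]; split => // N hN hdv; apply: NNPP => hne.
have [N' [hN' hdv']] := mingen_ex hN.
have hdM : mdvd N' M := mdvd_trans hdv' hdv.
have hne' : N' <> M.
  by move=> e; apply: hne; apply: mdvd_anti => //; rewrite -e.
have hI' : I N' by case: hN'.
case: (ltnP (N' lst) (M lst)) => hl.
  apply: hd; apply: (mclosed hI') => i; rewrite /decr.
  case: (eqVneq i lst) => [->|hi]; first by rewrite upd_eq; lia.
  by rewrite upd_neq.
have heq : N' lst = M lst by have := hdM lst; lia.
have [j hj] := neq_ex hne'.
have hjl : j != lst by apply/eqP => e; apply: hj; rewrite e.
have hlt : N' j < M j by have := hdM j; lia.
apply: hd; apply: (mclosed (stab hN' ltac:(lia) hjl)) => i.
rewrite /decr; case: (eqVneq i j) => [->|hij]; first by rewrite upd_eq upd_neq.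
rewrite upd_neq //; case: (eqVneq i lst) => [->|hil]; first by rewrite !upd_eq heq.
by rewrite !ffunE (negbTE hil).
Qed.

End Main.

Section Count.
Variable n : nat.
Variable I : mon n.+2 -> Prop.
Hypothesis HI : almost_revlex I.

Definition Bc e := count_deg (fun m : mon n.+2 => ~ I m /\ ~ (0 < m (lst n))) e.
Definition Gc e := count_deg (fun M : mon n.+2 => mingen I M /\ maxvar M = n.+2 /\ mdeg M = e) e.
Definition Ac e := count_deg (fun m : mon n.+2 => ~ I (incr m)) e.
Definition Cc e := count_deg (fun m : mon n.+2 => ~ I m /\ I (incr m)) e.

Lemma H_split e : count_deg (fun m => ~ I m) e =
   count_deg (fun m : mon n.+2 => ~ I m /\ 0 < m (lst n)) e + Bc e.
Proof. exact: count_split. Qed.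

Lemma Top e : count_deg (fun m : mon n.+2 => ~ I m /\ 0 < m (lst n)) e.+1 = Ac e.
Proof.
symmetry; apply: (count_transfer (F := @incr n)).
- move=> m hm hI; rewrite mdeg_incr hm; split => //; split => //.
  by rewrite /incr upd_eq.
- by move=> m1 m2 _ _ _ _ /(congr1 (@decr n)); rewrite !decr_incr.
- move=> M hM [hI h0]; exists (decr M); split.
  + by rewrite mdeg_decr // hM.
  + by rewrite incr_decr.
  + by rewrite incr_decr.
Qed.

Lemma Top0 : count_deg (fun m : mon n.+2 => ~ I m /\ 0 < m (lst n)) 0 = 0.
Proof. by apply: count0 => m /mdeg0 h [_]; rewrite h. Qed.

Lemma H_split2 e : count_deg (fun m => ~ I m) e = Ac e + Cc e.
Proof.
rewrite (count_split _ (fun m => I (incr m))) addnC; congr (_ + _).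
apply: count_ext => m _; split; first by case.
move=> h; split => // hm; apply: h; exact: (mclosed HI hm (incr_dvd m)).
Qed.

Lemma G_C e : Gc e.+1 = Cc e.
Proof.
symmetry; apply: (count_transfer (F := @incr n)).
- move=> m hm [h1 h2]; rewrite mdeg_incr hm; split => //.
  have h0 : 0 < incr m (lst n) by rewrite /incr upd_eq.
  split; first by apply/(mingenE HI h0); rewrite decr_incr.
  by split => //; apply/maxvarE.
- by move=> m1 m2 _ _ _ _ /(congr1 (@decr n)); rewrite !decr_incr.
- move=> M hM [hg [hmax _]]; have h0 := proj1 (maxvarE M) hmax.
  have [h1 h2] := proj1 (mingenE HI h0) hg.
  exists (decr M); split.
  + by rewrite mdeg_decr // hM.
  + by rewrite incr_decr.
  + by rewrite incr_decr.
Qed.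

Lemma G0 : Gc 0 = 0.
Proof.
apply: count0 => M /mdeg0 h [_ [/maxvarE]]; by rewrite h.
Qed.

Lemma hilb_neg (J : mon n.+2 -> Prop) (d : int) : (d < 0)%R -> hilb J d = 0%R.
Proof. by case: d. Qed.

Lemma hilb_diff (e : nat) :
  hilb I e%:Z = (hilb I (e%:Z - 1) + (Bc e)%:Z - (Gc e)%:Z)%R.
Proof.
case: e => [|e].
  rewrite [hilb I (0%:Z - 1)]hilb_neg // G0 /= H_split Top0 /=. lia.
have -> : ((e.+1)%:Z - 1 = e%:Z)%R by lia.
rewrite /= H_split Top H_split2 G_C; lia.
Qed.

Lemma hilb_add e : hilb (add_var I n.+1) (Posz e) = Posz (Bc e).
Proof.
rewrite /= /Bc; congr Posz; apply: count_ext => m _; split.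
  move=> h; split => [hm|hm]; apply: h; [by left | right].
  by exists (lst n).
move=> [h1 h2] [//|[i [hi hm]]]; apply: h2.
by have -> : lst n = i by apply: val_inj.
Qed.

Definition zm : mon n.+2 := [ffun _ => 0].

Lemma xpowE t : xpow n.+2 n t = upd zm (pen n) t.
Proof.
apply/ffunP => i; rewrite !ffunE; congr (if _ then _ else _).
Qed.

Lemma mdeg_xpow t : mdeg (xpow n.+2 n t) = t.
Proof.
have := mdeg_upd zm (pen n) t; rewrite xpowE.
have -> : mdeg zm = 0 by rewrite /mdeg big1 // => i _; rewrite ffunE.
by rewrite ffunE; lia.
Qed.

Lemma xpow_lst t : xpow n.+2 n t (lst n) = 0.
Proof. rewrite ffunE; case: eqP => // h; exfalso; move: h => /=; lia. Qed.

Lemma xpow_pen t : xpow n.+2 n t (pen n) = t.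
Proof. by rewrite ffunE /= eqxx. Qed.

Lemma xpow_gen N e : mingen I N -> 0 < N (lst n) -> mdeg N = e -> I (xpow n.+2 n e).
Proof.
move=> hN h0 he; apply: (arev HI hN); first by rewrite mdeg_xpow.
right; split; first by rewrite mdeg_xpow.
exists (lst n); split; first by rewrite xpow_lst.
by move=> t ht; have := ltn_ord t; rewrite /= in ht; lia.
Qed.

Variable f : nat.
Hypothesis Hf : I (xpow n.+2 n f).
Hypothesis Hmin : forall t, I (xpow n.+2 n t) -> f <= t.

Lemma Gzero e : e < f -> Gc e = 0.
Proof.
move=> hlt; apply: count0 => M hM [hg [/maxvarE h0 _]].
have := Hmin (xpow_gen hg h0 hM); lia.
Qed.

Lemma Bpos e : e < f -> 0 < Bc e.
Proof.
move=> hlt; apply: (count_gt0 (m := xpow n.+2 n e)); first exact: mdeg_xpow.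
split; last by rewrite xpow_lst.
by move=> /Hmin; lia.
Qed.

Lemma xf_mingen : mingen I (xpow n.+2 n f).
Proof.
split => // N hN hd.
have hNE : N = xpow n.+2 n (N (pen n)).
  apply/ffunP => i; rewrite [RHS]ffunE; case: ifP => [/eqP h|h].
    by have -> : i = pen n by apply: val_inj.
  by have := hd i; rewrite ffunE h leqn0 => /eqP.
have h1 := hd (pen n); rewrite xpow_pen in h1.
have h2 := Hmin (eq_ind _ I hN _ hNE).
by rewrite hNE; congr xpow; lia.
Qed.

Lemma base M : mdeg M = f -> M (lst n) = 0 -> I M.
Proof.
move=> hM h0; case: (classic (M = xpow n.+2 n f)) => [->|hne] //.
apply: (arev HI xf_mingen); first by rewrite mdeg_xpow.
right; split; first by rewrite mdeg_xpow.
exists (pen n); split.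
  rewrite xpow_pen; have := le_mdeg M (pen n); rewrite leq_eqVlt hM.
  case/orP => // /eqP hp; exfalso; apply: hne.
  have hu := mdeg_upd M (pen n) 0.
  have hz : mdeg (upd M (pen n) 0) = 0 by lia.
  apply/ffunP => i; rewrite ffunE; case: ifP => [/eqP hi|hi].
    by have -> : i = pen n by apply: val_inj.
  have := mdeg0 i hz; rewrite upd_neq //; apply/eqP => e; move: hi; rewrite e /=.
  by rewrite eqxx.
move=> t ht.
have -> : t = lst n by apply: val_inj; have := ltn_ord t; rewrite /= in ht *; lia.
by rewrite h0 xpow_lst.
Qed.

Lemma allI e : f <= e -> forall M, mdeg M = e -> M (lst n) = 0 -> I M.
Proof.
elim: e => [|e IH] hfe M hM h0.
  by apply: base => //; lia.
case: (leqP f e) => hfe'; last by apply: base => //; lia.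
have [i hi] : exists i, 0 < M i by apply: mdeg_pos; lia.
have hil : i != lst n by apply/eqP => e'; move: hi; rewrite e' h0.
have hu := mdeg_upd M i (M i).-1.
apply: (mclosed HI (a := upd M i (M i).-1)).
  apply: IH => //; first lia.
  by rewrite upd_neq // eq_sym.
move=> j; case: (eqVneq j i) => [->|hj]; first by rewrite upd_eq leq_pred.
by rewrite upd_neq.
Qed.

Lemma Bzero e : f <= e -> Bc e = 0.
Proof.
move=> hfe; apply: count0 => M hM [hI h0]; apply: hI; apply: (allI hfe hM).
by apply/eqP; rewrite -leqn0 leqNgt; apply/negP.
Qed.

End Count.

Unset Implicit Arguments.
Local Open Scope ring_scope.

Theorem corollary3p5 (n : nat) (I : mon n -> Prop) (Mw : mon n) :
  (2 <= n)%N -> almost_revlex I -> last_gen I Mw -> maxvar Mw = n ->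
  exists f : nat,
    (* f = f_{n-1}(0) = min { t : x_{n-1}^t \in I } *)
    (I (xpow n n.-2 f) /\ forall t : nat, I (xpow n n.-2 t) -> (f <= t)%N) /\
    (* (1) *)
    (forall d : nat, (f <= d)%N ->
       hilb I (d%:Z - 1) - hilb I d%:Z
         = (count_deg (fun M => mingen I M /\ maxvar M = n /\ mdeg M = d) d)%:Z
       /\ hilb I d%:Z <= hilb I (d%:Z - 1)) /\
    (* (2) *)
    (forall d : nat, (d < f)%N -> hilb I (d%:Z - 1) < hilb I d%:Z) /\
    (* (3) *)
    (hilb I f%:Z <= hilb I (f%:Z - 1) /\
     forall d : nat, hilb I d%:Z <= hilb I (d%:Z - 1) -> (f <= d)%N) /\
    (* (4) *)
    (forall d : int, hilb (add_var I n.-1) d = Num.max 0 (hilb I d - hilb I (d - 1))).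
Proof.
case: n I Mw => [|[|n]] // I Mw _ HI [HMw _] Hmax /=.
have h0 := proj1 (maxvarE Mw) Hmax.
have exf : exists t, `[< I (xpow n.+2 n t) >].
  by exists (mdeg Mw); apply/asboolP; exact: (xpow_gen HI HMw h0 (erefl _)).
case: (ex_minnP exf) => f /asboolP Hf Hmin'.
have Hmin : forall t, I (xpow n.+2 n t) -> (f <= t)%N.
  by move=> t ht; apply: Hmin'; apply/asboolP.
have D := hilb_diff HI.
have Bz := Bzero HI Hf Hmin.
have Bp := Bpos Hmin.
have Gz := Gzero HI Hmin.
have P1 : forall d : nat, (f <= d)%N ->
       hilb I (d%:Z - 1) - hilb I d%:Z = (Gc I d)%:Z.
  by move=> d hd; rewrite D Bz //; lia.
have P2 : forall d : nat, (d < f)%N -> hilb I (d%:Z - 1) < hilb I d%:Z.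
  move=> d hd; rewrite D Gz //; have := Bp _ hd; lia.
exists f; split; first by split.
split.
  move=> d hd; split; first exact: P1.
  by rewrite -subr_ge0 P1.
split; first exact: P2.
split.
  split; first by rewrite -subr_ge0 P1.
  move=> d hd; rewrite leqNgt; apply/negP => hlt; by move: (P2 _ hlt); rewrite ltNge hd.
case=> [e|e].
  rewrite hilb_add D.
  case: (leqP f e) => he.
    rewrite Bz //; rewrite max_l //; lia.
  rewrite Gz //; rewrite max_r //; lia.
by rewrite !hilb_neg.
Qed.
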